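(* Let $S$ be a classical-quantum program, $s\ge 0$ an integer, $\mathcal{T}$ an $s$-fault transition tree starting with $(S,\emptyset)$, and $\rho$ a quantum state. Then for every position $v$ of the tree schema of $S$, $$\mathrm{supp}\big(q(v_{\mathcal{T}(\rho)})\big)\subseteq\sum_{\mathcal{T}'}\mathrm{supp}\big(q(v_{\mathcal{T}'(\rho)})\big),$$ where the sum (of subspaces, i.e. the span of their union) ranges over all $s$-Pauli-fault transition trees $\mathcal{T}'$ starting with $(S,\emptyset)$ whose faulty transitions occur at exactly the same locations (edges of the tree schema) as the faulty transitions of $\mathcal{T}$.
   Context: Programs, transitions and trees. A classical-quantum program (cq-prog) on qubits is generated by the grammar $S ::= S_1;S_2 \mid q:=|0\rangle \mid U(\bar q)\mid x:=\mathtt{measure}\ q \mid x:=e \mid \mathtt{if}\ b\ \mathtt{then}\ S_1\ \mathtt{else}\ S_2 \mid y:=f(x) \mid \mathtt{repeat}\ S\ \mathtt{until}\ b$. Configurations are triples $\langle S,\sigma,\rho\rangle$ (program or terminated program $\downarrow$, classical state, partial density operator). Ideal transitions: initialization resets $q$ to $|0\rangle$ via $\rho\mapsto\rho_{q:=|0\rangle}:=|0\rangle_q\langle0|\rho|0\rangle_q\langle0|+|0\rangle_q\langle1|\rho|1\rangle_q\langle0|$; $U(\bar q)$ applies $\rho\mapsto U_{\bar q}\rho U_{\bar q}^\dagger$; $x:=\mathtt{measure}\ q$ has two branches setting $x:=c$ and $\rho\mapsto|c\rangle_q\langle c|\rho|c\rangle_q\langle c|$, $c\in\{0,1\}$; classical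 assignments, oracle calls, conditionals and sequencing act in the standard way; $\mathtt{repeat}\ S\ \mathtt{until}\ b$ steps to $S;\mathtt{if}\ b\ \mathtt{then}\ \downarrow\ \mathtt{else}\ \{\mathtt{repeat}\ S\ \mathtt{until}\ b\}$. Faulty transitions replace the quantum operation of an initialization or unitary statement by an arbitrary trace-preserving completely positive map acting only on the same qubits, and replace the two branches of a measurement on $q$ by arbitrary completely positive maps $\mathcal{E}_{0,q},\mathcal{E}_{1,q}$ acting only on $q$ with $\mathcal{E}_{0,q}+\mathcal{E}_{1,q}$ trace-preserving; classical operations are never faulty. An $s$-fault transition tree starting with $(S,\emptyset)$ is a (possibly infinite) tree of configurations with root $\langle S,\emptyset,\widetilde\rho\rangle$ ($\widetilde\rho$ indeterminate), leaves exactly the configurations with program $\downarrow$, measurement nodes with two children (both ideal or both faulty), other nodes one child by an ideal or faulty transition, and at most $s$ faulty transitions on every path; $\mathcal{T}(\rho)$ is obtained by substituting $\rho$ for $\widetilde\rho$. An $s$-Pauli-fault transition tree is one in which every faulty transition has the restricted form: initialization $\rho\mapsto P_q\rho_{q:=|0\rangle}P_q$; unitary $\rho\mapsto P_{\bar q}U_{\bar q}\rho U_{\bar q}^\dagger P_{\bar q}$; measurement branches $\rho\mapsto P_{c,q}|c\rangle_q\langle c|Q_q\rho Q_q|c\rangle_q\langle c|P_{c,q}$ ($c\in\{0,1\}$), with arbitrary Pauli operators on the indicated qubits and the same $Q_q$ for both branches. Tree schema. Since classical operations are never faulty, all such trees starting with $(S,\emptyset)$ have the same shape: a node is identified by its position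 (the sequence of branch choices at measurement nodes along the path from the root), and the program and classical state at each position are independent of the tree. This common shape is the tree schema of $S$. For a position $v$ and a tree $\mathcal{T}$, $v_{\mathcal{T}(\rho)}$ is the node at position $v$ in $\mathcal{T}(\rho)$ and $q(v_{\mathcal{T}(\rho)})$ its quantum component. $\mathrm{supp}(A)$ denotes the range of a positive semidefinite operator $A$. *)

(* Defs.v *)
(* Quantum operators on n qubits are represented as
   functions  B n -> B n -> C  where  B n = {ffun 'I_n -> bool}  is the
   computational basis and  C  is an arbitrary numClosedFieldType
   (this includes the complex numbers). *)
From mathcomp Require Import all_boot all_order all_algebra.
Set Implicit Arguments.
Unset Strict Implicit.
Unset Printing Implicit Defensive.
Import Order.TTheory GRing.Theory Num.Theory.
Local Open Scope ring_scope.

Definition basis (n : nat) := {ffun 'I_n -> bool}.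
Definition vec (C : numClosedFieldType) (n : nat) := basis n -> C.
Definition op (C : numClosedFieldType) (n : nat) := basis n -> basis n -> C.

Section LinAlg.
Variables (C : numClosedFieldType) (n : nat).
Local Notation op := (op C n).
Local Notation vec := (vec C n).

Definition opmul (A B : op) : op := fun x y => \sum_(z : basis n) A x z * B z y.
Definition opadd (A B : op) : op := fun x y => A x y + B x y.
Definition opzero : op := fun _ _ => 0.
Definition opid : op := fun x y => (x == y)%:R.
Definition adj (A : op) : op := fun x y => (A y x)^*.
Definition apply (A : op) (v : vec) : vec := fun x => \sum_(y : basis n) A x y * v y.
Definition dotv (u v : vec) : C := \sum_(x : basis n) (u x)^* * v x.
Definition trace (A : op) : C := \sum_(x : basis n) A x x.
Definition opsum (l : seq op) : op := foldr opadd opzero l.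

Definition psd (A : op) : Prop := forall v : vec, 0 <= dotv v (apply A v).
Definition density (rho : op) : Prop := psd rho /\ trace rho = 1.

Definition in_supp (A : op) (u : vec) : Prop := exists w : vec, u = apply A w.

Definition in_span (W : vec -> Prop) (u : vec) : Prop :=
  exists (ws : seq vec) (cs : seq C),
    (forall i, (i < size ws)%N -> W (nth (fun _ => 0) ws i)) /\
    u = fun x => \sum_(i < size ws) cs`_i * (nth (fun _ => 0) ws i) x.

(* A acts only on the qubits in Q, i.e. A = A_Q (x) Id *)
Definition agree_off (Q : seq 'I_n) (x y : basis n) : Prop :=
  forall i, i \notin Q -> x i = y i.
Definition acts_on (Q : seq 'I_n) (A : op) : Prop :=
  (forall x y, ~ agree_off Q x y -> A x y = 0) /\
  (forall x y x' y', agree_off Q x y -> agree_off Q x' y' ->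
     (forall i, i \in Q -> x i = x' i) -> (forall i, i \in Q -> y i = y' i) ->
     A x y = A x' y').

Definition unitary (U : op) : Prop := opmul (adj U) U = opid /\ opmul U (adj U) = opid.

Definition kraus (ks : seq op) (rho : op) : op :=
  opsum [seq opmul (opmul K rho) (adj K) | K <- ks].
Definition kraus_TP (ks : seq op) : Prop :=
  opsum [seq opmul (adj K) K | K <- ks] = opid.

Definition cp_on (Q : seq 'I_n) (E : op -> op) (ks : seq op) : Prop :=
  (forall i, (i < size ks)%N -> acts_on Q (nth opzero ks i)) /\ (forall rho, E rho = kraus ks rho).

Definition tpcp_on (Q : seq 'I_n) (E : op -> op) : Prop :=
  exists ks, cp_on Q E ks /\ kraus_TP ks.

Definition meas_fault_on (Q : seq 'I_n) (E0 E1 : op -> op) : Prop :=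
  exists ks0 ks1, cp_on Q E0 ks0 /\ cp_on Q E1 ks1 /\ kraus_TP (ks0 ++ ks1).

Definition op1 (q : 'I_n) (M : bool -> bool -> C) : op :=
  fun x y => if [forall i, (i != q) ==> (x i == y i)] then M (x q) (y q) else 0.
Definition ketbra (q : 'I_n) (a b : bool) : op :=
  op1 q (fun i j => ((i == a) && (j == b))%:R).

(* Pauli matrices: 0 = I, 1 = X, 2 = Y, 3 = Z  (rows/cols indexed by bits) *)
Definition pauli1 (k : 'I_4) (i j : bool) : C :=
  match val k with
  | 0%N => (i == j)%:R
  | 1%N => (i != j)%:R
  | 2%N => if i == j then 0 else if i then 'i else - 'i
  | _ => if i == j then (if i then -1 else 1) else 0
  end.
Definition pauli_op (p : {ffun 'I_n -> 'I_4}) : op :=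
  fun x y => \prod_(i : 'I_n) pauli1 (p i) (x i) (y i).
Definition pauli_on (Q : seq 'I_n) (P : op) : Prop :=
  exists p : {ffun 'I_n -> 'I_4}, (forall i, i \notin Q -> p i = ord0) /\ P = pauli_op p.

Definition init_map (q : 'I_n) (rho : op) : op :=
  opadd (opmul (opmul (ketbra q false false) rho) (ketbra q false false))
        (opmul (opmul (ketbra q false true) rho) (ketbra q true false)).
Definition unit_map (U : op) (rho : op) : op := opmul (opmul U rho) (adj U).
Definition meas_map (q : 'I_n) (c : bool) (rho : op) : op :=
  opmul (opmul (ketbra q c c) rho) (ketbra q c c).

End LinAlg.

Definition var := nat.
Definition value := nat.
Definition cstate := var -> option value.
Definition empty_cstate : cstate := fun _ => None.
Definition upd (s : cstate) (x : var) (v : option value) : cstate :=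
  fun y => if y == x then v else s y.

Section Programs.
Variables (C : numClosedFieldType) (n : nat).
Local Notation op := (op C n).

(* Expressions, Boolean guards and oracles are shallowly embedded. *)
Inductive prog : Type :=
| PSeq of prog & prog
| PInit of 'I_n
| PUnit of seq 'I_n & op
| PMeas of var & 'I_n
| PAssign of var & (cstate -> value)
| PIf of (cstate -> bool) & prog & prog
| POracle of var & (value -> value) & var
| PRepeat of prog & (cstate -> bool)
| PIfStop of (cstate -> bool) & prog.           (* runtime form: if b then (terminated) else S *)

Fixpoint wf_prog (S0 : prog) : Prop :=
  match S0 with
  | PSeq S1 S2 => wf_prog S1 /\ wf_prog S2
  | PUnit qs U => unitary U /\ acts_on qs U
  | PIf _ S1 S2 => wf_prog S1 /\ wf_prog S2
  | PRepeat S1 _ => wf_prog S1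
  | PIfStop _ S1 => wf_prog S1
  | _ => True
  end.

Inductive qaction : Type :=
| QSkip
| QInit of 'I_n
| QUnit of seq 'I_n & op
| QMeas of 'I_n & bool.

(* program component: None = terminated *)
Definition cfg := (option prog * cstate)%type.

(* Successors of a (non-terminated) configuration; the list has two
   elements (outcomes 0, 1) for measurements and one element otherwise. *)
Fixpoint step (S0 : prog) (s : cstate) : seq (option prog * cstate * qaction) :=
  match S0 with
  | PSeq S1 S2 =>
      [seq (Some (match t.1.1 with None => S2 | Some S1' => PSeq S1' S2 end), t.1.2, t.2)
      | t <- step S1 s]
  | PInit q => [:: (None, s, QInit q)]
  | PUnit qs U => [:: (None, s, QUnit qs U)]
  | PMeas x q => [:: (None, upd s x (Some 0%N), QMeas q false);
                     (None, upd s x (Some 1%N), QMeas q true)]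
  | PAssign x e => [:: (None, upd s x (Some (e s)), QSkip)]
  | PIf b S1 S2 => [:: (Some (if b s then S1 else S2), s, QSkip)]
  | POracle y f x => [:: (None, upd s y (omap f (s x)), QSkip)]
  | PRepeat S1 b => [:: (Some (PSeq S1 (PIfStop b (PRepeat S1 b))), s, QSkip)]
  | PIfStop b S1 => [:: (if b s then None else Some S1, s, QSkip)]
  end.

(* A position is the list of child indices chosen along the path from the
   root (false = first/only child or outcome 0, true = outcome 1). *)
Definition position := seq bool.

(* choice of transition at an internal node: ideal, or faulty with the
   quantum map(s) used (indexed by the measurement outcome; for
   non-measurement nodes only index false is used) *)
Inductive tchoice : Type :=
| Ideal
| Faulty of (bool -> op -> op).

Definition is_faulty (c : tchoice) : bool := if c is Faulty _ then true else false.

(* A transition tree (with indeterminate root state) is described by the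
   transition choice at each position of the tree schema. *)
Definition tree := position -> tchoice.

Definition ideal_map (a : qaction) : op -> op :=
  match a with
  | QSkip => id
  | QInit q => init_map q
  | QUnit _ U => unit_map U
  | QMeas q c => meas_map q c
  end.

Definition edge_map (ch : tchoice) (a : qaction) : op -> op :=
  match ch with
  | Ideal => ideal_map a
  | Faulty E => match a with QMeas _ c => E c | _ => E false end
  end.

(* Returns the node reached (program,
   classical state, quantum state), or None if v is not a position. *)
Fixpoint walk (T : tree) (pre : position) (c : cfg) (rho : op) (v : position)
  : option (cfg * op) :=
  match v with
  | [::] => Some (c, rho)
  | b :: v' =>
      match c.1 with
      | None => None
      | Some S1 =>
          let succ := step S1 c.2 in
          if (nat_of_bool b < size succ)%N then
            let t := nth (None, c.2, QSkip) succ (nat_of_bool b) in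
            walk T (rcons pre b) (t.1.1, t.1.2) (edge_map (T pre) t.2 rho) v'
          else None
      end
  end.

Definition node (S0 : prog) (T : tree) (rho : op) (v : position) : option (cfg * op) :=
  walk T [::] (Some S0, empty_cstate) rho v.

(* tree schema: program and classical state at position v (independent of T) *)
Definition schema (S0 : prog) (v : position) : option cfg :=
  omap fst (node S0 (fun _ => Ideal) (@opzero C n) v).

Definition in_schema (S0 : prog) (v : position) : Prop := schema S0 v <> None.

Definition internal (S0 : prog) (v : position) : Prop :=
  exists S' s, schema S0 v = Some (Some S', s).

Definition qnode (S0 : prog) (T : tree) (rho : op) (v : position) : op :=
  match node S0 T rho v with Some (_, r) => r | None => @opzero C n end.

Definition fault_ok (S' : prog) (s : cstate) (E : bool -> op -> op) : Prop :=
  match step S' s with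
  | (_, _, QInit q) :: _ => tpcp_on [:: q] (E false)
  | (_, _, QUnit qs _) :: _ => tpcp_on qs (E false)
  | (_, _, QMeas q _) :: _ => meas_fault_on [:: q] (E false) (E true)
  | _ => False   (* classical operations are never faulty *)
  end.

Definition pauli_fault_ok (S' : prog) (s : cstate) (E : bool -> op -> op) : Prop :=
  match step S' s with
  | (_, _, QInit q) :: _ =>
      exists P, pauli_on [:: q] P /\
        forall rho, E false rho = opmul (opmul P (init_map q rho)) P
  | (_, _, QUnit qs U) :: _ =>
      exists P, pauli_on qs P /\
        forall rho, E false rho = opmul (opmul P (unit_map U rho)) P
  | (_, _, QMeas q _) :: _ =>
      exists (P : bool -> op) Q, (forall c, pauli_on [:: q] (P c)) /\ pauli_on [:: q] Q /\
        forall c rho, E c rho =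
          opmul (opmul (P c) (meas_map q c (opmul (opmul Q rho) Q))) (P c)
  | _ => False
  end.

Definition nfaults (T : tree) (v : position) : nat :=
  count (fun i => is_faulty (T (take i v))) (iota 0 (size v)).

Definition fault_tree (s : nat) (S0 : prog) (T : tree) : Prop :=
  (forall v S' cs E, schema S0 v = Some (Some S', cs) -> T v = Faulty E -> fault_ok S' cs E) /\
  (forall v, in_schema S0 v -> (nfaults T v <= s)%N).

Definition pauli_fault_tree (s : nat) (S0 : prog) (T : tree) : Prop :=
  fault_tree s S0 T /\
  (forall v S' cs E, schema S0 v = Some (Some S', cs) -> T v = Faulty E ->
     pauli_fault_ok S' cs E).

Definition same_fault_locations (S0 : prog) (T T' : tree) : Prop :=
  forall v, internal S0 v -> is_faulty (T v) = is_faulty (T' v).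

End Programs.

(* Main.v *)
Require Import Defs.
From mathcomp Require Import all_boot all_order all_algebra ring.
From Stdlib Require Import FunctionalExtensionality.
Set Implicit Arguments.
Unset Strict Implicit.
Unset Printing Implicit Defensive.
Import Order.TTheory GRing.Theory Num.Theory.
Local Open Scope ring_scope.

Ltac fext2 := let x := fresh "x" in let y := fresh "y" in
  apply: functional_extensionality => x; apply: functional_extensionality => y.
Ltac fext := let x := fresh "x" in apply: functional_extensionality => x.

Section OpAlg.
Variables (C : numClosedFieldType) (n : nat).
Local Notation op := (op C n).
Local Notation vec := (vec C n).
Local Notation B := (basis n).

Lemma opmulA (A D E : op) : opmul (opmul A D) E = opmul A (opmul D E).
Proof.
fext2; rewrite /opmul.
under eq_bigr do rewrite big_distrl /=.
rewrite exchange_big /=; apply: eq_bigr => z _.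
rewrite big_distrr /=; apply: eq_bigr => w _; by rewrite mulrA.
Qed.

Lemma apply_mul (A D : op) (w : vec) : apply (opmul A D) w = apply A (apply D w).
Proof.
fext; rewrite /apply /opmul.
under eq_bigr do rewrite big_distrl /=.
rewrite exchange_big /=; apply: eq_bigr => z _.
rewrite big_distrr /=; apply: eq_bigr => y _; by rewrite mulrA.
Qed.

Lemma adj_mul (A D : op) : adj (opmul A D) = opmul (adj D) (adj A).
Proof.
fext2; rewrite /adj /opmul rmorph_sum; apply: eq_bigr => z _.
by rewrite rmorphM mulrC.
Qed.

Lemma adjK (A : op) : adj (adj A) = A.
Proof. by fext2; rewrite /adj conjCK. Qed.

Lemma dotv_adj (u w : vec) (A : op) :
  dotv u (apply A w) = dotv (apply (adj A) u) w.
Proof.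
rewrite /dotv /apply.
under eq_bigr do rewrite big_distrr /=.
rewrite exchange_big /=; apply: eq_bigr => y _.
rewrite rmorph_sum big_distrl /=; apply: eq_bigr => x _.
by rewrite /adj (rmorphM Num.conj_op) /= conjCK mulrA [_ * A x y]mulrC.
Qed.

Lemma opmulDl (A D E : op) : opmul (opadd A D) E = opadd (opmul A E) (opmul D E).
Proof. by fext2; rewrite /opmul /opadd -big_split; apply: eq_bigr => z _; rewrite mulrDl. Qed.

Lemma opmulDr (A D E : op) : opmul E (opadd A D) = opadd (opmul E A) (opmul E D).
Proof. by fext2; rewrite /opmul /opadd -big_split; apply: eq_bigr => z _; rewrite mulrDr. Qed.

Lemma opmul1 (A : op) : opmul A (@opid C n) = A.
Proof.
fext2; rewrite /opmul /opid (bigD1 y) //= eqxx mulr1 big1 ?addr0 //.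
by move=> z /negbTE zy; rewrite zy mulr0.
Qed.

Lemma op1mul (A : op) : opmul (@opid C n) A = A.
Proof.
fext2; rewrite /opmul /opid (bigD1 x) //= eqxx mul1r big1 ?addr0 //.
by move=> z /negbTE zy; rewrite eq_sym zy mul0r.
Qed.

Lemma adj_id : adj (@opid C n) = @opid C n.
Proof. fext2; rewrite /adj /opid eq_sym; case: (x == y); by rewrite /= ?rmorph1 ?rmorph0. Qed.

Lemma opadd0 (A : op) : opadd A (@opzero C n) = A.
Proof. by fext2; rewrite /opadd /opzero addr0. Qed.

Lemma apply_add (A D : op) w : apply (opadd A D) w = fun x => apply A w x + apply D w x.
Proof. by fext; rewrite /apply /opadd -big_split; apply: eq_bigr => y _; rewrite mulrDl. Qed.

Lemma apply_zero w : apply (@opzero C n) w = fun _ => 0.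
Proof. by fext; rewrite /apply big1 // => y _; rewrite /opzero mul0r. Qed.

Lemma apply_id w : apply (@opid C n) w = w.
Proof.
fext; rewrite /apply /opid (bigD1 x) //= eqxx mul1r big1 ?addr0 //.
by move=> z /negbTE zy; rewrite eq_sym zy mul0r.
Qed.

End OpAlg.

Section Span.
Variables (C : numClosedFieldType) (n : nat).
Local Notation op := (op C n).
Local Notation vec := (vec C n).

Inductive spanI (W : vec -> Prop) : vec -> Prop :=
| sp_mem w : W w -> spanI W w
| sp_zero : spanI W (fun _ => 0)
| sp_add u w : spanI W u -> spanI W w -> spanI W (fun x => u x + w x)
| sp_scale c u : spanI W u -> spanI W (fun x => c * u x).

Lemma spanI_big (W : vec -> Prop) (I : Type) (r : seq I) (P : pred I) (F : I -> vec) :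
  (forall i, P i -> spanI W (F i)) -> spanI W (fun x => \sum_(i <- r | P i) F i x).
Proof.
move=> H; elim: r => [|i r IH].
  have -> : (fun x => \sum_(i <- [::] | P i) F i x) = (fun _ => 0) by fext; rewrite big_nil.
  exact: sp_zero.
case Pi: (P i).
  have -> : (fun x => \sum_(j <- i :: r | P j) F j x) =
            (fun x => F i x + \sum_(j <- r | P j) F j x) by fext; rewrite big_cons Pi.
  by apply: sp_add => //; apply: H.
have -> : (fun x => \sum_(j <- i :: r | P j) F j x) =
          (fun x => \sum_(j <- r | P j) F j x) by fext; rewrite big_cons Pi.
exact: IH.
Qed.

Lemma spanI_eq (W : vec -> Prop) (u u' : vec) : spanI W u -> u = u' -> spanI W u'.
Proof. by move=> H <-. Qed.

Lemma in_span_spanI (W : vec -> Prop) (u : vec) : in_span W u -> spanI W u.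
Proof.
case=> ws [cs [Hw ->]].
rewrite (_ : (fun x => _) = (fun x => \sum_(i < size ws | true) (fun i : 'I_(size ws) =>
   (fun y => cs`_i * (nth (fun _ => 0) ws i) y)) i x)); last by fext.
apply: spanI_big => i _; apply: sp_scale; apply: sp_mem; exact: Hw.
Qed.

Lemma in_span_norm (W : vec -> Prop) (u : vec) : in_span W u -> exists ws cs, size cs = size ws /\
    (forall i, (i < size ws)%N -> W (nth (fun _ => 0) ws i)) /\
    u = fun x => \sum_(i < size ws) cs`_i * (nth (fun _ => 0) ws i) x.
Proof.
case=> ws [cs [Hw ->]]; exists ws, (mkseq (fun i => cs`_i) (size ws)).
split; first by rewrite size_mkseq.
split=> //; fext; apply: eq_bigr => i _; by rewrite nth_mkseq.
Qed.

Lemma spanI_in_span (W : vec -> Prop) (u : vec) : spanI W u -> in_span W u.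
Proof.
elim=> {u}.
- move=> w Ww; exists [:: w], [:: 1]; split.
    by case=> //.
  by fext; rewrite big_ord1 /= mul1r.
- exists [::], [::]; split=> //; by fext; rewrite big_ord0.
- move=> u w _ /in_span_norm [ws1 [cs1 [E1 [H1 ->]]]] _ /in_span_norm [ws2 [cs2 [E2 [H2 ->]]]].
  exists (ws1 ++ ws2), (cs1 ++ cs2); split.
    move=> i; rewrite size_cat nth_cat => Hi; case: ifP => Hi1; first exact: H1.
    apply: H2; rewrite -(ltn_add2l (size ws1)) subnKC //; by rewrite leqNgt Hi1.
  fext; rewrite -!(big_mkord xpredT (fun i => cs1`_i * nth (fun _ => 0) ws1 i x))
    -!(big_mkord xpredT (fun i => cs2`_i * nth (fun _ => 0) ws2 i x))
    -!(big_mkord xpredT (fun i => (cs1 ++ cs2)`_i * nth (fun _ => 0) (ws1 ++ ws2) i x)).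
  rewrite size_cat (big_cat_nat _ (leq_addr _ _)) //=; congr (_ + _).
    by apply: eq_big_nat => i /andP [_ Hi]; rewrite !nth_cat E1 Hi.
  rewrite -[X in _ = \sum_(X <= _ < _) _](add0n (size ws1)) big_addn addKn.
  apply: eq_big_nat => i _.
  by rewrite !nth_cat E1 ltnNge leq_addl /= addnK.
- move=> c u _ /in_span_norm [ws [cs [E [H ->]]]].
  exists ws, (map (fun a => c * a) cs); split=> //.
  fext; rewrite big_distrr /=; apply: eq_bigr => i _.
  by rewrite (nth_map 0) ?E // mulrA.
Qed.

Lemma spanI_mono (W W' : vec -> Prop) u :
  (forall w, W w -> spanI W' w) -> spanI W u -> spanI W' u.
Proof.
move=> H; elim=> {u}; [by [] | exact: sp_zero | by move=> *; apply: sp_add | by move=> *; apply: sp_scale].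
Qed.

Lemma apply_vadd (M : op) (u w : vec) :
  apply M (fun x => u x + w x) = fun x => apply M u x + apply M w x.
Proof. by fext; rewrite /apply -big_split; apply: eq_bigr => y _; rewrite mulrDr. Qed.
Lemma apply_vscale (M : op) c (u : vec) :
  apply M (fun x => c * u x) = fun x => c * apply M u x.
Proof. by fext; rewrite /apply big_distrr; apply: eq_bigr => y _; rewrite mulrCA. Qed.
Lemma apply_v0 (M : op) : apply M (fun _ => 0) = fun _ => 0.
Proof. by fext; rewrite /apply big1 // => y _; rewrite mulr0. Qed.

Lemma spanI_apply (W W' : vec -> Prop) (M : op) u :
  (forall w, W w -> spanI W' (apply M w)) -> spanI W u -> spanI W' (apply M u).
Proof.
move=> H; elim=> {u}.
- by [].
- rewrite apply_v0; exact: sp_zero.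
- by move=> u w _ Hu _ Hw; rewrite apply_vadd; apply: sp_add.
- by move=> c u _ Hu; rewrite apply_vscale; apply: sp_scale.
Qed.

End Span.

Section LA.
Variables (C : numClosedFieldType) (n : nat).
Local Notation op := (op C n).
Local Notation vec := (vec C n).
Local Notation N := #|{: basis n}|.

Lemma sum_basis (F : basis n -> C) :
  \sum_(b : basis n) F b = \sum_(j < N) F (enum_val j).
Proof. rewrite -big_enum_val /=. by apply: eq_bigl. Qed.

Lemma range_orth (A : op) (y : vec) :
  (forall x : vec, apply (adj A) x = (fun _ => 0) -> dotv x y = 0) -> in_supp A y.
Proof.
move=> H.
pose e := (@enum_val (basis n) predT).
pose R : 'M[C]_N := \matrix_(i, j) A (e j) (e i).
pose yr : 'rV[C]_N := \row_j y (e j).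
have sub : (yr <= R)%MS.
  rewrite submxE; move: (cokermx R) (mulmx_coker R) => K HK.
  apply/eqP/matrixP => i0 k; rewrite !mxE.
  pose x : vec := fun b => (K (enum_rank b) k)^*.
  have Hx : apply (adj A) x = (fun _ => 0).
    fext; rewrite /apply /adj /x.
    transitivity (((R *m K) (enum_rank x0) k)^*); last first.
      by rewrite HK mxE rmorph0.
    rewrite mxE rmorph_sum sum_basis.
    apply: eq_bigr => j _; rewrite (rmorphM Num.conj_op) /= enum_valK !mxE /e enum_rankK.
    by [].
  have := H x Hx; rewrite /dotv sum_basis => E; rewrite -[RHS]E.
  apply: eq_bigr => j _; rewrite /x enum_valK conjCK mxE mulrC //.
case/submxP: sub => D HD.
exists (fun b => D 0 (enum_rank b)).
fext; rewrite /apply sum_basis.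
have := congr1 (fun M : 'M[C]_(1, N) => M 0 (enum_rank x)) HD.
rewrite /yr !mxE /e enum_rankK => ->.
apply: eq_bigr => j _; by rewrite mxE /e enum_valK enum_rankK mulrC.
Qed.

End LA.

Section Psd.
Variables (C : numClosedFieldType) (n : nat).
Local Notation op := (op C n).
Local Notation vec := (vec C n).

Lemma real_quad (s c : C) : 0 <= c ->
  (forall e : C, e \is Num.real -> 0 <= e * s + e ^+ 2 * c) -> s = 0.
Proof.
move=> c0 H.
have sr : s \is Num.real.
  have := H 1 (rpred1 _); rewrite mul1r expr1n mul1r => /ger0_real sc.
  have -> : s = (s + c) - c by rewrite addrK.
  by apply: rpredB => //; apply: ger0_real.
have c1 : c + 1 != 0 by rewrite gt_eqF // ltr_wpDl // ltr01.
have er : - s / (c + 1) \is Num.real.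
  by rewrite rpredM ?rpredN // realV rpredD ?rpred1 // ger0_real.
have := H _ er.
have -> : - s / (c + 1) * s + (- s / (c + 1)) ^+ 2 * c = - (s / (c + 1)) ^+ 2.
  by field.
rewrite oppr_ge0 => Hle.
have Hge : 0 <= (s / (c + 1)) ^+ 2.
  by apply: real_exprn_even_ge0 => //; rewrite rpredM // realV rpredD ?rpred1 // ger0_real.
have /eqP : (s / (c + 1)) ^+ 2 = 0 by apply/eqP; rewrite eq_le Hle Hge.
rewrite sqrf_eq0 mulf_eq0 invr_eq0 (negbTE c1) orbF => /eqP //.
Qed.

Lemma dotv_expand (Bm : op) (y z : vec) t :
  dotv (fun x => y x + t * z x) (apply Bm (fun x => y x + t * z x)) =
  dotv y (apply Bm y) + t * dotv y (apply Bm z) + t^* * dotv z (apply Bm y)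
  + t^* * t * dotv z (apply Bm z).
Proof.
rewrite apply_vadd apply_vscale /dotv !big_distrr -!big_split /=.
apply: eq_bigr => x _; rewrite rmorphD (rmorphM Num.conj_op) /=.
ring.
Qed.

Lemma psd_zero (Bm : op) (y : vec) : psd Bm -> dotv y (apply Bm y) = 0 ->
  forall z, dotv y (apply Bm z) = 0.
Proof.
move=> P H0 z.
set a := dotv y (apply Bm z); set b := dotv z (apply Bm y); set c := dotv z (apply Bm z).
have c0 : 0 <= c by apply: P.
have h1 : a + b = 0.
  apply: (real_quad c0) => e er.
  have := P (fun x => y x + e * z x); rewrite dotv_expand H0 (conj_Creal er) -/a -/b -/c.
  by congr (0 <= _); ring.
have h2 : 'i * (a - b) = 0.
  apply: (real_quad c0) => e er.
  have := P (fun x => y x + ('i * e) * z x); rewrite dotv_expand H0 -/a -/b -/c.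
  rewrite (rmorphM Num.conj_op) /= (conj_Creal er) conjCi.
  congr (0 <= _); have -> : - 'i * e * ('i * e) * c = - ('i * 'i) * e ^+ 2 * c by ring.
  rewrite mulCii opprK mul1r; ring.
move/eqP: h2; rewrite mulf_eq0 (negbTE (@neq0Ci C)) /= subr_eq0 => /eqP hab.
move: h1; rewrite hab -mulr2n -mulr_natr => /eqP; rewrite mulf_eq0 pnatr_eq0 orbF.
by move/eqP.
Qed.

Lemma apply_kraus (ks : seq op) (Bm : op) (x : vec) :
  apply (kraus ks Bm) x = fun b => \sum_(K <- ks) apply K (apply Bm (apply (adj K) x)) b.
Proof.
elim: ks => [|K ks IH].
  rewrite /kraus /= apply_zero; fext; by rewrite big_nil.
rewrite /kraus /= apply_add -/(kraus ks Bm) IH; fext.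
by rewrite big_cons !apply_mul.
Qed.

Lemma dotv_sum (I : Type) (r : seq I) (F : I -> vec) x :
  dotv x (fun b => \sum_(i <- r) F i b) = \sum_(i <- r) dotv x (F i).
Proof.
rewrite /dotv; under eq_bigr do rewrite big_distrr /=.
by rewrite exchange_big.
Qed.

Lemma dotv_kraus (ks : seq op) (Bm : op) (x : vec) :
  dotv x (apply (kraus ks Bm) x) =
  \sum_(K <- ks) dotv (apply (adj K) x) (apply Bm (apply (adj K) x)).
Proof. by rewrite apply_kraus dotv_sum; apply: eq_bigr => K _; rewrite dotv_adj. Qed.

Lemma psd_kraus (ks : seq op) (Bm : op) : psd Bm -> psd (kraus ks Bm).
Proof. move=> P v; rewrite dotv_kraus; apply: sumr_ge0 => K _; exact: P. Qed.

Lemma sum_ge0_eq0 (I : Type) (r : seq I) (F : I -> C) :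
  (forall i, 0 <= F i) -> \sum_(i <- r) F i = 0 -> forall i, List.In i r -> F i = 0.
Proof.
elim: r => [|a r IH] // H; rewrite big_cons => /eqP.
have Hr0 : 0 <= \sum_(i <- r) F i by apply: sumr_ge0 => i _; apply: H.
rewrite (paddr_eq0 (H a) Hr0).
case/andP=> /eqP Ha /eqP Hr i /= [<- //|ir].
exact: IH.
Qed.

Lemma dotv0 (x : vec) : dotv (fun _ => 0) x = 0.
Proof. by rewrite /dotv big1 // => y _; rewrite rmorph0 mul0r. Qed.

Lemma psd_range (Bm : op) (ks : seq op) (K : op) (w : vec) :
  psd Bm -> List.In K ks -> in_supp Bm w -> in_supp (kraus ks Bm) (apply K w).
Proof.
move=> P Kin [z ->]; apply: range_orth => x Hx.
rewrite dotv_adj; apply: psd_zero => //.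
have : dotv x (apply (kraus ks Bm) x) = 0 by rewrite dotv_adj Hx dotv0.
rewrite dotv_kraus => /sum_ge0_eq0; apply => //.
Qed.

End Psd.

Section Prod.
Variables (C : numClosedFieldType) (n : nat).
Local Notation op := (op C n).
Local Notation vec := (vec C n).

Definition prodop (f : 'I_n -> bool -> bool -> C) : op :=
  fun x y => \prod_(i : 'I_n) f i (x i) (y i).

Definition dl (u v : bool) : C := (u == v)%:R.

Lemma prodop_mul f g :
  opmul (prodop f) (prodop g) = prodop (fun i u v => \sum_(b : bool) f i u b * g i b v).
Proof.
fext2; rewrite /prodop /opmul bigA_distr_bigA /=; apply: eq_bigr => z _.
by rewrite -big_split.
Qed.

Lemma prodop_adj f : adj (prodop f) = prodop (fun i u v => (f i v u)^*).
Proof. by fext2; rewrite /adj /prodop rmorph_prod. Qed.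

Lemma prodop_ext f g : (forall i u v, f i u v = g i u v) -> prodop f = prodop g.
Proof. by move=> H; fext2; rewrite /prodop; apply: eq_bigr => i _; rewrite H. Qed.

Lemma prod_ind (P : 'I_n -> bool) : \prod_(i : 'I_n) ((P i)%:R : C) = ([forall i, P i])%:R.
Proof.
case: (boolP [forall i, P i]) => H.
  by rewrite big1 // => i _; rewrite (forallP H).
have [i Hi] : exists i, ~~ P i.
  by apply/existsP; move: H; rewrite negb_forall.
by rewrite (bigD1 i) //= (negbTE Hi) mul0r.
Qed.

Lemma prodop_id : prodop (fun _ => dl) = @opid C n.
Proof.
fext2; rewrite /prodop /dl prod_ind /opid; congr ((nat_of_bool _)%:R).
apply/idP/idP => [/forallP H|/eqP ->]; [by apply/eqP/ffunP => i; apply/eqP/H | by apply/forallP].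
Qed.

Lemma pauli_prodop (p : {ffun 'I_n -> 'I_4}) : pauli_op C p = prodop (fun i => pauli1 C (p i)).
Proof. by []. Qed.

Lemma pauli1_0 : pauli1 C ord0 = dl.
Proof. by []. Qed.

Lemma pauli1_sq (k : 'I_4) u v : \sum_(b : bool) pauli1 C k u b * pauli1 C k b v = dl u v.
Proof.
rewrite /pauli1 /dl big_bool /=.
case: k => [[|[|[|[|k]]]] Hk] /=; case: u; case: v => /=;
  rewrite ?mul0r ?mulr0 ?add0r ?addr0 ?mulr1 ?mul1r ?mulrN ?mulNr ?opprK ?mulCii //.
all: by rewrite ?mulr1 // opprK.
Qed.

Lemma pauli1_adj (k : 'I_4) u v : (pauli1 C k v u)^* = pauli1 C k u v.
Proof.
rewrite /pauli1.
case: k => [[|[|[|[|k]]]] Hk] /=; case: u; case: v => /=;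
  rewrite ?rmorph0 ?rmorph1 ?rmorphN ?rmorph1 ?conjCi ?opprK //.
by rewrite /= conjCi opprK.
Qed.

Lemma pauli_adj (p : {ffun 'I_n -> 'I_4}) : adj (pauli_op C p) = pauli_op C p.
Proof. by rewrite pauli_prodop prodop_adj; apply: prodop_ext => i u v; rewrite pauli1_adj. Qed.

Lemma pauli_sq (p : {ffun 'I_n -> 'I_4}) : opmul (pauli_op C p) (pauli_op C p) = @opid C n.
Proof. by rewrite pauli_prodop prodop_mul -prodop_id; apply: prodop_ext => i u v; rewrite pauli1_sq. Qed.

(* coefficient of |a><b| in the Pauli basis *)
Definition dcoef (a b : bool) (k : 'I_4) : C :=
  match val k with
  | 0%N => (a == b)%:R / 2
  | 1%N => (a != b)%:R / 2
  | 2%N => if a == b then 0 else if a then - 'i / 2 else 'i / 2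
  | _ => if a == b then (if a then -1/2 else 1/2) else 0
  end.

Lemma dcoefP a b u v : \sum_(k < 4) dcoef a b k * pauli1 C k u v = ((u == a) && (v == b))%:R.
Proof.
rewrite !big_ord_recl big_ord0 /dcoef /pauli1 /=.
have h2 : (2 : C) != 0 by rewrite pnatr_eq0.
case: a; case: b; case: u; case: v => /=;
 rewrite ?mul0r ?mulr0 ?add0r ?addr0 ?mulr1 ?mul1r //.
all: have E : forall z w : C, z / 2 * w = z * w / 2 by move=> z w; ring.
all: rewrite ?E ?mulNr ?mulrN ?mulCii ?opprK; field => //.
Qed.

Lemma prod_expand (c : 'I_n -> 'I_4 -> C) :
  prodop (fun i u v => \sum_(k < 4) c i k * pauli1 C k u v) =
  fun x y => \sum_(p : {ffun 'I_n -> 'I_4}) (\prod_i c i (p i)) * pauli_op C p x y.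
Proof.
fext2; rewrite /prodop bigA_distr_bigA /=; apply: eq_bigr => p _.
by rewrite -big_split.
Qed.

End Prod.

Section Acts.
Variables (C : numClosedFieldType) (n : nat).
Local Notation op := (op C n).
Local Notation vec := (vec C n).

Definition agreeb (Q : seq 'I_n) (x y : basis n) := [forall i, (i \notin Q) ==> (x i == y i)].

Lemma agreeP (Q : seq 'I_n) (x y : basis n) : reflect (agree_off Q x y) (agreeb Q x y).
Proof.
apply: (iffP forallP) => H i.
  by move=> iQ; have := H i; rewrite iQ => /eqP.
by apply/implyP => iQ; apply/eqP; apply: H.
Qed.

Lemma acts_on_prodop (Q : seq 'I_n) (f : 'I_n -> bool -> bool -> C) :
  (forall i, i \notin Q -> f i = @dl C) -> acts_on Q (prodop f).
Proof.
move=> Hf; split.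
  move=> x y /agreeP; rewrite negb_forall => /existsP [i].
  rewrite negb_imply => /andP [iQ /negbTE xy].
  by rewrite /prodop (bigD1 i) //= Hf // /dl xy mul0r.
move=> x y x' y' /agreeP /forallP A1 /agreeP /forallP A2 E1 E2.
rewrite /prodop; apply: eq_bigr => i _.
case iQ: (i \in Q); first by rewrite E1 ?E2.
have := A1 i; have := A2 i; rewrite iQ /= => /eqP -> /eqP ->.
by rewrite Hf ?iQ // /dl !eqxx.
Qed.

Lemma acts_on_pauli (Q : seq 'I_n) (p : {ffun 'I_n -> 'I_4}) :
  (forall i, i \notin Q -> p i = ord0) -> acts_on Q (pauli_op C p).
Proof. move=> H; rewrite pauli_prodop; apply: acts_on_prodop => i iQ; by rewrite H. Qed.

Lemma acts_on_lin (J : finType) (Q : seq 'I_n) (c : J -> C) (A : J -> op) :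
  (forall j, c j != 0 -> acts_on Q (A j)) -> acts_on Q (fun x y => \sum_j c j * A j x y).
Proof.
move=> H; split.
  move=> x y nag; rewrite big1 // => j _.
  case: (eqVneq (c j) 0) => [->|cj]; first by rewrite mul0r.
  by rewrite (proj1 (H j cj) x y nag) mulr0.
move=> x y x' y' a1 a2 e1 e2; apply: eq_bigr => j _.
case: (eqVneq (c j) 0) => [->|cj]; first by rewrite !mul0r.
by rewrite (proj2 (H j cj) x y x' y' a1 a2 e1 e2).
Qed.

Definition rQ (Q : seq 'I_n) (z : basis n) : basis n := [ffun i => if i \in Q then z i else false].

Definition gab (Q : seq 'I_n) (a b : basis n) (i : 'I_n) (u v : bool) : C :=
  (if i \in Q then (u == a i) && (v == b i) else [&& u == v, ~~ a i & ~~ b i])%:R.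

Lemma gab_forall (Q : seq 'I_n) (a b x y : basis n) :
  [forall i, if i \in Q then (x i == a i) && (y i == b i) else [&& x i == y i, ~~ a i & ~~ b i]]
  = [&& a == rQ Q x, b == rQ Q y & agreeb Q x y].
Proof.
apply/idP/idP.
  move/forallP=> H; apply/and3P; split.
  - apply/eqP/ffunP => i; rewrite ffunE; have := H i.
    by case: (i \in Q) => /=; [case/andP=> /eqP-> _| case/and3P => _ /negbTE -> _].
  - apply/eqP/ffunP => i; rewrite ffunE; have := H i.
    by case: (i \in Q) => /=; [case/andP=> _ /eqP-> | case/and3P => _ _ /negbTE ->].
  - apply/forallP => i; apply/implyP => iQ; have := H i; rewrite (negbTE iQ).
    by case/and3P.
case/and3P => /eqP-> /eqP-> /forallP Hag; apply/forallP => i; rewrite !ffunE.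
case iQ: (i \in Q) => /=; first by rewrite !eqxx.
by have := implyP (Hag i); rewrite iQ => /(_ isT) ->.
Qed.

Lemma sum_ind (F : basis n -> C) (a0 : basis n) :
  \sum_(a : basis n) ((a == a0)%:R * F a) = F a0.
Proof.
rewrite (bigD1 a0) //= eqxx mul1r big1 ?addr0 // => a /negbTE ->; by rewrite mul0r.
Qed.

Lemma decomp_gab (Q : seq 'I_n) (M : op) : acts_on Q M ->
  M = fun x y => \sum_(a : basis n) \sum_(b : basis n) M a b * prodop (gab Q a b) x y.
Proof.
case=> H1 H2; fext2.
under eq_bigr do under eq_bigr do rewrite /prodop /gab prod_ind gab_forall -!mulnb !natrM.
transitivity (\sum_(a : basis n) (a == rQ Q x)%:R *
   \sum_(b : basis n) (b == rQ Q y)%:R * (M a b * (agreeb Q x y)%:R)).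
  rewrite sum_ind sum_ind.
  case: (agreeP Q x y) => ag; last by rewrite H1 // mulr0.
  rewrite mulr1; apply: H2 => //.
  - by move=> i iQ; rewrite !ffunE (negbTE iQ).
  - by move=> i iQ; rewrite ffunE iQ.
  - by move=> i iQ; rewrite ffunE iQ.
apply: eq_bigr => a _; rewrite big_distrr; apply: eq_bigr => b _ /=.
ring.
Qed.

Definition cab (Q : seq 'I_n) (a b : basis n) (i : 'I_n) (k : 'I_4) : C :=
  if i \in Q then dcoef C (a i) (b i) k else (k == ord0)%:R * (~~ a i && ~~ b i)%:R.

Lemma gab_expand (Q : seq 'I_n) (a b : basis n) i u v : gab Q a b i u v = \sum_(k < 4) cab Q a b i k * pauli1 C k u v.
Proof.
rewrite /gab /cab; case: (i \in Q); first by rewrite dcoefP.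
rewrite (bigD1 ord0) //= big1 ?addr0; last first.
  by move=> k /negbTE ->; rewrite !mul0r.
rewrite mul1r /pauli1 /=.
by case: (u == v); case: (~~ a i && ~~ b i); rewrite /= ?mulr1 ?mulr0 ?mul0r.
Qed.

Lemma pauli_complete (Q : seq 'I_n) (M : op) : acts_on Q M ->
  exists c : {ffun 'I_n -> 'I_4} -> C,
    (forall p, c p != 0 -> forall i, i \notin Q -> p i = ord0) /\
    M = fun x y => \sum_p c p * pauli_op C p x y.
Proof.
move=> HM.
exists (fun p => \sum_(a : basis n) \sum_(b : basis n) M a b * \prod_i cab Q a b i (p i)).
split.
  move=> p cp i iQ; apply/eqP; apply: contraTT cp => pi; rewrite negbK; apply/eqP.
  rewrite big1 // => a _; rewrite big1 // => b _.
  by rewrite (bigD1 i) //= /cab (negbTE iQ) (negbTE pi) !mul0r mulr0.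
rewrite {1}(decomp_gab HM); fext2.
under eq_bigr do under eq_bigr do rewrite (prodop_ext (gab_expand Q _ _)) prod_expand.
under eq_bigr do under eq_bigr do rewrite big_distrr.
under eq_bigr do rewrite exchange_big.
rewrite exchange_big; apply: eq_bigr => p _.
rewrite big_distrl; apply: eq_bigr => a _.
rewrite big_distrl; apply: eq_bigr => b _ /=.
by rewrite mulrA.
Qed.

Lemma acts_on_mul (Q : seq 'I_n) (A D : op) : acts_on Q A -> acts_on Q D -> acts_on Q (opmul A D).
Proof.
move=> /pauli_complete [c [Hc ->]] /pauli_complete [d [Hd ->]].
have -> : opmul (fun x y => \sum_p c p * pauli_op C p x y) (fun x y => \sum_p d p * pauli_op C p x y)
  = fun x y => \sum_p c p * (\sum_p' d p' * opmul (pauli_op C p) (pauli_op C p') x y).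
  fext2; rewrite /opmul.
  under eq_bigr do rewrite big_distrl /=.
  rewrite exchange_big; apply: eq_bigr => p _ /=.
  under eq_bigr do rewrite big_distrr /=.
  rewrite big_distrr /= exchange_big; apply: eq_bigr => p' _ /=.
  rewrite big_distrr big_distrr; apply: eq_bigr => z _ /=; ring.
apply: acts_on_lin => p cp.
apply: acts_on_lin => p' dp'.
rewrite !pauli_prodop prodop_mul; apply: acts_on_prodop => i iQ.
rewrite (Hc p cp i iQ) (Hd p' dp' i iQ); fext2.
by rewrite -(pauli1_sq C ord0).
Qed.

Lemma acts_on_adj (Q : seq 'I_n) (A : op) : acts_on Q A -> acts_on Q (adj A).
Proof.
move=> /pauli_complete [c [Hc ->]].
have -> : adj (fun x y => \sum_p c p * pauli_op C p x y)
  = fun x y => \sum_p (c p)^* * pauli_op C p x y.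
  fext2; rewrite /adj rmorph_sum; apply: eq_bigr => p _.
  by rewrite (rmorphM Num.conj_op) /= -[pauli_op C p x y](congr1 (fun M => M x y) (pauli_adj C p)).
apply: acts_on_lin => p cp; apply: acts_on_pauli; apply: Hc.
by apply: contraNneq cp => ->; rewrite rmorph0.
Qed.

End Acts.

Section Qubit.
Variables (C : numClosedFieldType) (n : nat).
Local Notation op := (op C n).
Local Notation vec := (vec C n).

Lemma op1_prodop (q : 'I_n) (M : bool -> bool -> C) :
  op1 q M = prodop (fun i => if i == q then M else @dl C).
Proof.
fext2; rewrite /op1 /prodop (bigD1 q) //= eqxx.
rewrite (eq_bigr (fun i => (((i != q) ==> (x i == y i)) : bool)%:R)); last first.
  by move=> i /negbTE iq; rewrite iq /dl.
have E : \prod_i (((i != q) ==> (x i == y i)) : bool)%:R =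
         \prod_(i | i != q) (((i != q) ==> (x i == y i)) : bool)%:R :> C.
  by rewrite (bigD1 q) //= eqxx /= mul1r.
rewrite -E prod_ind; case: ifP => _; by rewrite ?mulr1 ?mulr0.
Qed.

Definition Xo : 'I_4 := Ordinal (isT : (1 < 4)%N).
Definition pq (q : 'I_n) (a : bool) : {ffun 'I_n -> 'I_4} :=
  [ffun i => if (i == q) && a then Xo else ord0].
Definition Pq (q : 'I_n) (a : bool) : op := pauli_op C (pq q a).

Lemma Pq_prodop (q : 'I_n) a : Pq q a = prodop (fun i => if i == q then pauli1 C (if a then Xo else ord0) else @dl C).
Proof.
rewrite /Pq pauli_prodop; apply: prodop_ext => i u v; rewrite /pq ffunE.
by case: (i == q); case: a.
Qed.

Lemma pauli_on_Pq (q : 'I_n) a : pauli_on [:: q] (Pq q a).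
Proof.
exists (pq q a); split => // i; rewrite inE /pq ffunE => /negbTE -> //.
Qed.

Lemma ketbra_prodop (q : 'I_n) a b : ketbra C q a b =
  prodop (fun i => if i == q then (fun u v => ((u == a) && (v == b))%:R) else @dl C).
Proof. by rewrite /ketbra op1_prodop. Qed.

Ltac qsimp q := let i := fresh "i" in let u := fresh "u" in let v := fresh "v" in
  apply: prodop_ext => i u v; case: (i == q); last (by rewrite /dl !big_bool; case: u; case: v;
    rewrite /= ?mulr0 ?mul0r ?mulr1 ?addr0 ?add0r);
  rewrite !big_bool /pauli1 /=.

Lemma ketbra_R1 (q : 'I_n) a b : ketbra C q a b = opmul (Pq q a) (ketbra C q false b).
Proof.
rewrite ketbra_prodop Pq_prodop ketbra_prodop prodop_mul.
qsimp q; case: a; case: b; case: u; case: v; by rewrite /= ?mulr0 ?mul0r ?mulr1 ?addr0 ?add0r.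
Qed.

Lemma ketbra_R2 (q : 'I_n) a b c : ketbra C q a b =
  opmul (opmul (Pq q (a (+) c)) (ketbra C q c c)) (Pq q (b (+) c)).
Proof.
rewrite ketbra_prodop !Pq_prodop ketbra_prodop !prodop_mul.
qsimp q; case: a; case: b; case: c; case: u; case: v;
  by rewrite /= ?mulr0 ?mul0r ?mulr1 ?addr0 ?add0r.

Qed.

Lemma ketbra_adj (q : 'I_n) a b : adj (ketbra C q a b) = ketbra C q b a.
Proof.
rewrite !ketbra_prodop prodop_adj; apply: prodop_ext => i u v.
case: (i == q); rewrite /dl; last by rewrite eq_sym; case: (u == v); rewrite ?rmorph1 ?rmorph0.
by rewrite andbC; case: (_ && _); rewrite ?rmorph1 ?rmorph0.
Qed.

Lemma ketbra_mul (q : 'I_n) a b c d : opmul (ketbra C q a b) (ketbra C q c d) =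
  if b == c then ketbra C q a d else @opzero C n.
Proof.
case: ifP => bc.
  rewrite !ketbra_prodop prodop_mul; qsimp q; move/eqP: bc => <-.
  case: a; case: b; case: d; case: u; case: v; by rewrite /= ?mulr0 ?mul0r ?mulr1 ?addr0 ?add0r.
fext2; rewrite /opmul /opzero big1 // => z _.
rewrite !ketbra_prodop /prodop (bigD1 q) //= eqxx [X in _ * X](bigD1 q) //= eqxx.
move: bc; case: b; case: c => // _; case: (z q);
  by rewrite /= ?andbF ?andbT ?mul0r ?mulr0.
Qed.

Lemma ketbra_sum (q : 'I_n) : opadd (ketbra C q false false) (ketbra C q true true) = @opid C n.
Proof.
rewrite -prodop_id !ketbra_prodop; fext2; rewrite /opadd /prodop.
rewrite (bigD1 q) //= eqxx [X in _ + X](bigD1 q) //= eqxx [X in _ = X](bigD1 q) //=.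
have E1 : forall a, \prod_(i | i != q) (if i == q then (fun u v : bool => ((u == a) && (v == a))%:R)
   else @dl C) (x i) (y i) = \prod_(i | i != q) @dl C (x i) (y i).
  by move=> a; apply: eq_bigr => i /negbTE ->.
rewrite !E1 -mulrDl; congr (_ * _).
by case: (x q); case: (y q); rewrite /dl /= ?addr0 ?add0r.



Qed.

Lemma Pq_adj (q : 'I_n) a : adj (Pq q a) = Pq q a.
Proof. exact: pauli_adj. Qed.

Lemma acts_on_ketbra (q : 'I_n) a b : acts_on [:: q] (ketbra C q a b).
Proof.
rewrite ketbra_prodop; apply: acts_on_prodop => i; rewrite inE => /negbTE -> //.
Qed.

Definition e1 (q : 'I_n) (a : bool) : basis n := [ffun i => if i == q then a else false].

Lemma decomp1 (q : 'I_n) (M : op) : acts_on [:: q] M ->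
  M = fun x y => \sum_(a : bool) \sum_(b : bool) M (e1 q a) (e1 q b) * ketbra C q a b x y.
Proof.
case=> H1 H2; fext2; rewrite /ketbra /op1.
case: (boolP [forall i, (i != q) ==> (x i == y i)]) => ag.
  have ->: M x y = M (e1 q (x q)) (e1 q (y q)).
    apply: H2.
    - by move=> i; rewrite inE => iq; have := implyP (forallP ag i) iq => /eqP.
    - by move=> i; rewrite inE => /negbTE iq; rewrite !ffunE iq.
    - by move=> i; rewrite inE => /eqP ->; rewrite ffunE eqxx.
    - by move=> i; rewrite inE => /eqP ->; rewrite ffunE eqxx.
  rewrite !big_bool /=.
  by case: (x q); case: (y q); rewrite /= ?mulr0 ?mulr1 ?addr0 ?add0r.
rewrite H1; first by rewrite !big1 // => a _; rewrite big1 // => b _; rewrite mulr0.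
move=> ag'; move: ag; rewrite negb_forall => /existsP [i]; rewrite negb_imply => /andP [iq].
by rewrite (ag' i) ?eqxx // inE.
Qed.

End Qubit.

Section Kraus.
Variables (C : numClosedFieldType) (n : nat).
Local Notation op := (op C n).
Local Notation vec := (vec C n).

Definition ideal_kraus (a : qaction C n) : seq op :=
  match a with
  | QSkip => [:: @opid C n]
  | QInit q => [:: ketbra C q false false; ketbra C q false true]
  | QUnit _ U => [:: U]
  | QMeas q c => [:: ketbra C q c c]
  end.

Lemma kraus1 (K rho : op) : kraus [:: K] rho = opmul (opmul K rho) (adj K).
Proof. by rewrite /kraus /= opadd0. Qed.

Lemma kraus2 (K K' rho : op) : kraus [:: K; K'] rho =
  opadd (opmul (opmul K rho) (adj K)) (opmul (opmul K' rho) (adj K')).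
Proof. by rewrite /kraus /= opadd0. Qed.

Lemma ideal_kraus_ok a rho : ideal_map a rho = kraus (ideal_kraus a) rho.
Proof.
case: a => [|q|qs U|q c] /=.
- by rewrite kraus1 adj_id opmul1 op1mul.
- by rewrite kraus2 /init_map !ketbra_adj.
- by rewrite kraus1.
- by rewrite kraus1 /meas_map ketbra_adj.
Qed.

Lemma kraus_TP1 (K : op) : kraus_TP [:: K] <-> opmul (adj K) K = @opid C n.
Proof. by rewrite /kraus_TP /= opadd0. Qed.

Lemma pauli_onP (Q : seq 'I_n) (P : op) : pauli_on Q P ->
  [/\ adj P = P, opmul P P = @opid C n & acts_on Q P].
Proof.
case=> p [Hp ->]; split; [exact: pauli_adj | exact: pauli_sq | exact: acts_on_pauli].
Qed.

Lemma sandwichL (P K rho : op) : adj P = P ->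
  opmul (opmul P (opmul (opmul K rho) (adj K))) P =
  opmul (opmul (opmul P K) rho) (adj (opmul P K)).
Proof. by move=> HP; rewrite adj_mul HP !opmulA. Qed.

Lemma sandwichR (Q K rho : op) : adj Q = Q ->
  opmul (opmul K (opmul (opmul Q rho) Q)) (adj K) =
  opmul (opmul (opmul K Q) rho) (adj (opmul K Q)).
Proof. by move=> HQ; rewrite adj_mul HQ !opmulA. Qed.

Lemma unit_pauli_kraus (P U rho : op) : adj P = P ->
  opmul (opmul P (unit_map U rho)) P = kraus [:: opmul P U] rho.
Proof. by move=> HP; rewrite kraus1 /unit_map sandwichL. Qed.

Lemma unit_pauli_tpcp (qs : seq 'I_n) (P U : op) : pauli_on qs P -> unitary U -> acts_on qs U ->
  tpcp_on qs (fun rho => opmul (opmul P (unit_map U rho)) P).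
Proof.
move=> /pauli_onP [HP HPP HPa] [HU _] HUa; exists [:: opmul P U]; split; last first.
  apply/kraus_TP1; by rewrite adj_mul HP opmulA -(opmulA P P) HPP op1mul.
split; first by case=> //= _; apply: acts_on_mul.
by move=> rho; rewrite unit_pauli_kraus.
Qed.

Lemma init_pauli_kraus (q : 'I_n) (P rho : op) : adj P = P ->
  opmul (opmul P (init_map q rho)) P =
  kraus [:: opmul P (ketbra C q false false); opmul P (ketbra C q false true)] rho.
Proof.
move=> HP; rewrite kraus2 /init_map opmulDr opmulDl -!sandwichL // !ketbra_adj //.
Qed.

Lemma init_pauli_tpcp (q : 'I_n) (P : op) : pauli_on [:: q] P ->
  tpcp_on [:: q] (fun rho => opmul (opmul P (init_map q rho)) P).
Proof.
move=> HPo; have [HP HPP HPa] := pauli_onP HPo.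
exists [:: opmul P (ketbra C q false false); opmul P (ketbra C q false true)]; split.
  split; last by move=> rho; rewrite init_pauli_kraus.
  case=> [|[|//]] _ /=; apply: acts_on_mul => //; exact: acts_on_ketbra.
rewrite /kraus_TP /= opadd0 !adj_mul !HP !opmulA -!(opmulA P P) HPP !op1mul.
by rewrite !ketbra_adj !ketbra_mul /= ketbra_sum.
Qed.

Lemma meas_pauli_kraus (q : 'I_n) c (P Q rho : op) : adj P = P -> adj Q = Q ->
  opmul (opmul P (meas_map q c (opmul (opmul Q rho) Q))) P =
  kraus [:: opmul (opmul P (ketbra C q c c)) Q] rho.
Proof.
move=> HP HQ; rewrite kraus1 /meas_map.
rewrite -{2}(ketbra_adj C q c c) sandwichR // sandwichL //.
by rewrite !adj_mul !opmulA.
Qed.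

Lemma meas_pauli_fault (q : 'I_n) (P : bool -> op) (Q : op) :
  (forall c, pauli_on [:: q] (P c)) -> pauli_on [:: q] Q ->
  meas_fault_on [:: q]
    (fun rho => opmul (opmul (P false) (meas_map q false (opmul (opmul Q rho) Q))) (P false))
    (fun rho => opmul (opmul (P true) (meas_map q true (opmul (opmul Q rho) Q))) (P true)).
Proof.
move=> HPc HQo; have [HQ HQQ HQa] := pauli_onP HQo.
have [HP0 HPP0 HPa0] := pauli_onP (HPc false).
have [HP1 HPP1 HPa1] := pauli_onP (HPc true).
exists [:: opmul (opmul (P false) (ketbra C q false false)) Q],
       [:: opmul (opmul (P true) (ketbra C q true true)) Q]; split; [|split].
- split; last by move=> rho; rewrite meas_pauli_kraus.
  case=> //= _; apply: acts_on_mul => //; apply: acts_on_mul => //; exact: acts_on_ketbra.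
- split; last by move=> rho; rewrite meas_pauli_kraus.
  case=> //= _; apply: acts_on_mul => //; apply: acts_on_mul => //; exact: acts_on_ketbra.
rewrite /kraus_TP /= opadd0 !adj_mul HQ HP0 HP1 !ketbra_adj.
have E : forall Pc, opmul Pc Pc = @opid C n -> forall c,
   opmul (opmul Q (opmul (ketbra C q c c) Pc)) (opmul (opmul Pc (ketbra C q c c)) Q)
   = opmul (opmul Q (ketbra C q c c)) Q.
  move=> Pc HPc2 c; rewrite !opmulA -(opmulA Pc Pc) HPc2 op1mul -(opmulA (ketbra C q c c)).
  by rewrite ketbra_mul eqxx.
rewrite (E _ HPP0) (E _ HPP1) -opmulDl -opmulDr ketbra_sum opmul1 //.
Qed.

End Kraus.

Section Trees.
Variables (C : numClosedFieldType) (n : nat).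
Local Notation op := (op C n).
Local Notation prog := (prog C n).
Local Notation tree := (tree C n).
Local Notation cfg := (cfg C n).

Definition one_step (T : tree) (p : position) (c : cfg) (r : op) (b : bool) : option (cfg * op) :=
  match c.1 with
  | None => None
  | Some S1 =>
      let succ := step S1 c.2 in
      if (nat_of_bool b < size succ)%N then
        let t := nth (None, c.2, QSkip C n) succ (nat_of_bool b) in
        Some ((t.1.1, t.1.2), edge_map (T p) t.2 r)
      else None
  end.

Lemma walk_cat (T : tree) pre (c : cfg) r v1 v2 :
  walk T pre c r (v1 ++ v2) =
  match walk T pre c r v1 with Some (c', r') => walk T (pre ++ v1) c' r' v2 | None => None end.
Proof.
elim: v1 pre c r => [|b v1 IH] pre c r /=; first by rewrite cats0.
case: c.1 => // S1; case: ifP => // _.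
by rewrite IH cat_rcons.
Qed.

Lemma walk1 (T : tree) pre (c : cfg) r b : walk T pre c r [:: b] = one_step T pre c r b.
Proof. rewrite /one_step /=; case: c.1 => // S1; by case: ifP. Qed.

Lemma node_rcons (S : prog) (T : tree) rho v b :
  node S T rho (rcons v b) =
  match node S T rho v with Some (c, r) => one_step T v c r b | None => None end.
Proof.
rewrite /node -cats1 walk_cat; case: walk => // [[c r]]; by rewrite walk1.
Qed.

Lemma walk_fst (T T' : tree) pre pre' (c : cfg) r r' v :
  omap fst (walk T pre c r v) = omap fst (walk T' pre' c r' v).
Proof.
elim: v pre pre' c r r' => [|b v IH] pre pre' c r r' //=.
case: c.1 => // S1; case: ifP => // _; exact: IH.
Qed.

Lemma schemaE (S : prog) (T : tree) rho v : schema S v = omap fst (node S T rho v).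
Proof. exact: walk_fst. Qed.

Lemma walk_ext (T T' : tree) pre (c : cfg) r v :
  (forall i, (i < size v)%N -> T (pre ++ take i v) = T' (pre ++ take i v)) ->
  walk T pre c r v = walk T' pre c r v.
Proof.
elim: v pre c r => [|b v IH] pre c r H //=.
case: c.1 => // S1; case: ifP => // _.
have -> : T pre = T' pre by have := H 0%N isT; rewrite take0 cats0.
apply: IH => i Hi; have := H i.+1 Hi; by rewrite /= cat_rcons.
Qed.

Definition qaction_of (S' : prog) (cs : cstate) (b : bool) : qaction C n :=
  (nth (None, cs, QSkip C n) (step S' cs) (nat_of_bool b)).2.

Lemma node_step (S : prog) v b : in_schema S (rcons v b) ->
  exists S' cs, schema S v = Some (Some S', cs) /\ (nat_of_bool b < size (step S' cs))%N /\
   forall (T : tree) rho, node S T rho (rcons v b) <> None /\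
     qnode S T rho (rcons v b) = edge_map (T v) (qaction_of S' cs b) (qnode S T rho v).
Proof.
rewrite /in_schema (schemaE _ (fun _ => Ideal C n) (@opzero C n)) node_rcons.
case E: (node S _ _ v) => [[c r]|] //.
rewrite /one_step; case Ec : c => [[S'|] cs] //=; case: ifP => // Hb _.
exists S', cs; split.
  by rewrite (schemaE _ (fun _ => Ideal C n) (@opzero C n)) E Ec.
split => // T rho.
have := walk_fst (fun _ => Ideal C n) T [::] [::] (Some S, empty_cstate) (@opzero C n) rho v.
rewrite -/(node _ _ _ v) -/(node _ _ _ v) E Ec /=.
rewrite /qnode node_rcons.
case: (node S T rho v) => // [[c' r']] [<-]; rewrite /one_step /= Hb //.
Qed.

Lemma in_schema_prefix (S : prog) v1 v2 : in_schema S (v1 ++ v2) -> in_schema S v1.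
Proof.
rewrite /in_schema /schema /node walk_cat.
by case: walk.
Qed.

Lemma internal_of (S : prog) v b : in_schema S (rcons v b) -> internal S v.
Proof. by case/node_step => S' [cs [H _]]; exists S', cs. Qed.

Lemma internal_take (S : prog) v i : in_schema S v -> (i < size v)%N -> internal S (take i v).
Proof.
move=> H Hi; move: H; rewrite -{1}(cat_take_drop i v).
case E: (drop i v) => [|x r]; first by move: Hi; rewrite -subn_gt0 -size_drop E.
rewrite -cat1s catA cats1 => /in_schema_prefix; exact: internal_of.
Qed.

Definition tupd (T : tree) (v0 : position) (ch : tchoice C n) : tree :=
  fun v => if v == v0 then ch else T v.

Lemma qnode_tupd (S : prog) (T : tree) v ch rho : qnode S (tupd T v ch) rho v = qnode S T rho v.
Proof.
rewrite /qnode /node (walk_ext (T' := T)) // => i Hi /=; rewrite /tupd.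
case: eqP => // E; have := congr1 size E; rewrite size_take Hi => /eqP.
by rewrite ltn_eqF.
Qed.

End Trees.

Section Progs.
Variables (C : numClosedFieldType) (n : nat).
Local Notation op := (op C n).
Local Notation prog := (prog C n).
Local Notation tree := (tree C n).
Local Notation cfg := (cfg C n).
Local Notation qa := (qaction C n).

Definition shape (l : seq (option prog * cstate * qa)) : Prop :=
  (exists o s', l = [:: (o, s', QSkip C n)]) \/
  (exists q o s', l = [:: (o, s', @QInit C n q)]) \/
  (exists qs U o s', l = [:: (o, s', @QUnit C n qs U)]) \/
  (exists q o0 s0 o1 s1, l = [:: (o0, s0, @QMeas C n q false); (o1, s1, @QMeas C n q true)]).

Lemma step_shape (S0 : prog) s : shape (step S0 s).
Proof.
elim: S0 s => [S1 IH1 S2 _|q|qs U|x q|x e|b S1 _ S2 _|y f x|S1 _ b|b S1 _] s /=;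
 rewrite /shape.
- case: (IH1 s) => [[o [s' ->]]|[[q [o [s' ->]]]|[[qs [U [o [s' ->]]]]|[q [o0 [s0 [o1 [s1 ->]]]]]]]] /=.
  + by left; do 2 eexists.
  + by right; left; do 3 eexists.
  + by right; right; left; do 4 eexists.
  + by right; right; right; do 5 eexists.
- by right; left; do 3 eexists.
- by right; right; left; do 4 eexists.
- by right; right; right; do 5 eexists.
- by left; do 2 eexists.
- by left; do 2 eexists.
- by left; do 2 eexists.
- by left; do 2 eexists.
- by left; do 2 eexists.
Qed.

Lemma In_map_inv (A B : Type) (f : A -> B) (l : seq A) y :
  List.In y (map f l) -> exists x, List.In x l /\ y = f x.
Proof.
elim: l => [|a l IH] //= [<-|H]; first by exists a; split=> //; left.
by case: (IH H) => x [Hx ->]; exists x; split=> //; right.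
Qed.

Lemma nth_In (A : Type) (d : A) (l : seq A) i : (i < size l)%N -> List.In (nth d l i) l.
Proof.
elim: l i => [|a l IH] [|i] //= Hi; first by left.
by right; apply: IH.
Qed.

Ltac inv_in := repeat match goal with
  | H : List.In _ _ |- _ => simpl in H
  | H : _ \/ _ |- _ => destruct H as [H|H]
  | H : (_, _, _) = (_, _, _) |- _ => injection H as ? ? ?; subst
  | H : False |- _ => destruct H
  end.

Definition step_ok (o : option prog) (a : qa) : Prop :=
  (forall S'', o = Some S'' -> wf_prog S'') /\
  (forall qs U, a = @QUnit C n qs U -> unitary U /\ acts_on qs U).

Lemma step_wf (S0 : prog) s : wf_prog S0 ->
  forall o s' a, List.In (o, s', a) (step S0 s) -> step_ok o a.
Proof.
elim: S0 s => [S1 IH1 S2 _|q|qs U|x q|x e|b S1 _ S2 _|y f x|S1 _ b|b S1 _] s /= Hwf o s' a;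
 rewrite /step_ok.
- case: Hwf => w1 w2 Hin0.
  have [[[o1 s1] a1] [Hin E]] := In_map_inv Hin0; case: E => -> _ ->.
  have [h1 h2] := IH1 s w1 _ _ _ Hin; split=> // S'' [<-].
  by case: o1 Hin h1 => [S1'|] Hin h1 /=; [split=> //; exact: h1 | ].
- move=> H; inv_in; by split=> // ? ?.
- move=> H; inv_in; split=> // ? ? [<- <-]; exact: Hwf.
- move=> H; inv_in; by split=> // ? ?.
- move=> H; inv_in; by split=> // ? ?.
- move=> H; inv_in; split=> [S'' [<-]|//]; case: Hwf; by case: (b _).
- move=> H; inv_in; by split=> // ? ?.
- move=> H; inv_in; split=> [S'' [<-] /=|//]; by split.
- move=> H; inv_in; split=> [S''|//]; case: (b _) => // [[<-]] //.
Qed.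

Lemma schema_wf (S : prog) v S' cs : wf_prog S -> schema S v = Some (Some S', cs) -> wf_prog S'.
Proof.
move=> Hw; elim/last_ind: v S' cs => [|v b IH] S' cs.
  by rewrite /schema /node /= => [[<-]].
rewrite (schemaE _ (fun _ => Ideal C n) (@opzero C n)) node_rcons.
case E: (node S _ _ v) => [[c r]|] //.
rewrite /one_step; case Ec : c => [[S1|] cs1] //=; case: ifP => // Hb.
have w1 : wf_prog S1.
  by apply: (IH S1 cs1); rewrite (schemaE _ (fun _ => Ideal C n) (@opzero C n)) E Ec.
have Hin := nth_In (None, cs1, QSkip C n) Hb.
move: Hin; case: (nth _ _ _) => [[o s'] a] Hin [Eo _].
have [h _] := step_wf w1 Hin; exact: h.
Qed.

Definition unit_ok (S' : prog) (cs : cstate) : Prop :=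
  forall o s' qs U l, step S' cs = (o, s', @QUnit C n qs U) :: l -> unitary U /\ acts_on qs U.

Lemma schema_unit_ok (S : prog) v S' cs : wf_prog S -> schema S v = Some (Some S', cs) -> unit_ok S' cs.
Proof.
move=> Hw Hs o s' qs U l E.
have w' := schema_wf Hw Hs.
have Hin : List.In (o, s', @QUnit C n qs U) (step S' cs) by rewrite E; left.
by have [_ h] := step_wf w' Hin; apply: h.
Qed.

Lemma pf_ok (S' : prog) cs (E : bool -> op -> op) :
  unit_ok S' cs -> pauli_fault_ok S' cs E -> fault_ok S' cs E.
Proof.
rewrite /unit_ok /pauli_fault_ok /fault_ok => Hu.
case E1: (step S' cs) => [|[[o s'] a] l] //.
case: a E1 => [|q|qs U|q c] E1 //.
- case=> P [HP HE].
  have -> : E false = fun rho => opmul (opmul P (init_map q rho)) P by fext; apply: HE.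
  exact: init_pauli_tpcp.
- case=> P [HP HE]; have [HU HUa] := Hu _ _ _ _ _ E1.
  have -> : E false = fun rho => opmul (opmul P (unit_map U rho)) P by fext; apply: HE.
  exact: unit_pauli_tpcp.
- case=> P [Q [HP [HQ HE]]].
  have -> : E false = fun rho =>
     opmul (opmul (P false) (meas_map q false (opmul (opmul Q rho) Q))) (P false) by fext; apply: HE.
  have -> : E true = fun rho =>
     opmul (opmul (P true) (meas_map q true (opmul (opmul Q rho) Q))) (P true) by fext; apply: HE.
  exact: meas_pauli_fault.
Qed.

End Progs.

Section Faults.
Variables (C : numClosedFieldType) (n : nat).
Local Notation op := (op C n).
Local Notation prog := (prog C n).
Local Notation tree := (tree C n).

Lemma fault_cases (S' : prog) cs (E : bool -> op -> op) (b : bool) :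
  fault_ok S' cs E -> (nat_of_bool b < size (step S' cs))%N ->
  (exists q o s' ks, step S' cs = [:: (o, s', @QInit C n q)] /\
     qaction_of S' cs b = @QInit C n q /\ cp_on [:: q] (E false) ks) \/
  (exists qs U o s' ks, step S' cs = [:: (o, s', @QUnit C n qs U)] /\
     qaction_of S' cs b = @QUnit C n qs U /\ cp_on qs (E false) ks) \/
  (exists q o0 s0 o1 s1 ks, step S' cs = [:: (o0, s0, @QMeas C n q false); (o1, s1, @QMeas C n q true)] /\
     qaction_of S' cs b = @QMeas C n q b /\ cp_on [:: q] (E b) ks).
Proof.
rewrite /fault_ok /qaction_of.
case: (step_shape S' cs) => [[o [s' ->]]|[[q [o [s' ->]]]|[[qs [U [o [s' ->]]]]|[q [o0 [s0 [o1 [s1 ->]]]]]]]] //=.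
- case=> ks [Hks _]; case: b => // _.
  by left; exists q, o, s', ks.
- case=> ks [Hks _]; case: b => // _.
  by right; left; exists qs, U, o, s', ks.
- case=> ks0 [ks1 [H0 [H1 _]]] _; right; right.
  by case: b; [exists q, o0, s0, o1, s1, ks1 | exists q, o0, s0, o1, s1, ks0].
Qed.

Lemma apply_lin2 (f : bool -> bool -> C) (K : bool -> bool -> op) (w : vec C n) :
  apply (fun x y => \sum_(a : bool) \sum_(b : bool) f a b * K a b x y) w =
  fun x => \sum_(a : bool) \sum_(b : bool) f a b * apply (K a b) w x.
Proof.
fext; rewrite /apply.
under eq_bigr do rewrite big_distrl /=; rewrite exchange_big /=; apply: eq_bigr => a _.
under eq_bigr do rewrite big_distrl /=; rewrite exchange_big /=; apply: eq_bigr => b _.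
rewrite big_distrr /=; apply: eq_bigr => y _; by rewrite mulrA.
Qed.

Lemma apply_linP (c : {ffun 'I_n -> 'I_4} -> C) (w : vec C n) :
  apply (fun x y => \sum_p c p * pauli_op C p x y) w =
  fun x => \sum_p c p * apply (pauli_op C p) w x.
Proof.
fext; rewrite /apply.
under eq_bigr do rewrite big_distrl /=; rewrite exchange_big /=; apply: eq_bigr => p _.
rewrite big_distrr /=; apply: eq_bigr => y _; by rewrite mulrA.
Qed.

Lemma span_kraus (W W' : vec C n -> Prop) (ks : seq op) (A : op) u :
  in_supp (kraus ks A) u -> (forall y, in_supp A y -> spanI W y) ->
  (forall i, (i < size ks)%N -> forall w, W w -> spanI W' (apply (nth (@opzero C n) ks i) w)) ->
  spanI W' u.
Proof.
move=> [z ->] HA HK; rewrite apply_kraus.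
rewrite (_ : (fun b => _) = (fun b => \sum_(0 <= i < size ks | (0 <= i < size ks)%N && true)
    apply (nth (@opzero C n) ks i) (apply A (apply (adj (nth (@opzero C n) ks i)) z)) b)); last first.
  by fext; rewrite (big_nth (@opzero C n)) big_nat_cond.
apply: spanI_big => i /andP [/andP [_ Hi] _].
apply: spanI_apply (HK i Hi) _; apply: HA; by eexists.
Qed.

End Faults.

Section Main.
Variables (C : numClosedFieldType) (n : nat) (S : prog C n) (s : nat) (T : tree C n) (rho : op C n).
Hypotheses (Hwf : wf_prog S) (HT : fault_tree s S T) (Hrho : psd rho).
Local Notation op := (op C n).
Local Notation tree := (tree C n).

Definition good (T' : tree) := pauli_fault_tree s S T' /\ same_fault_locations S T T'.

Lemma good_of (T' : tree) :
  (forall v, internal S v -> is_faulty (T v) = is_faulty (T' v)) ->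
  (forall v S' cs E, schema S v = Some (Some S', cs) -> T' v = Faulty E -> pauli_fault_ok S' cs E) ->
  good T'.
Proof.
move=> H1 H2; split; [split; [split|] |] => //.
- move=> v S' cs E Hs HE; apply: pf_ok; [exact: schema_unit_ok Hwf Hs | exact: H2 Hs HE].
- move=> v Hv; have := (proj2 HT) v Hv.
  suff -> : nfaults T' v = nfaults T v by [].
  apply: eq_in_count => i; rewrite mem_iota add0n => /andP [_ Hi].
  by rewrite H1 //; apply: internal_take.
Qed.

Lemma good_upd (T' : tree) v0 S' cs G :
  good T' -> schema S v0 = Some (Some S', cs) -> is_faulty (T v0) -> pauli_fault_ok S' cs G ->
  good (tupd T' v0 (Faulty G)).
Proof.
move=> [[_ HP] HL] Hs Hf HG; apply: good_of.
  move=> v Hv; rewrite /tupd; case: eqP => [->|_]; [by rewrite Hf | exact: HL].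
move=> v S1 cs1 E Hs1; rewrite /tupd; case: eqP => [E0 [<-]|_]; last exact: HP.
by move: Hs1; rewrite E0 Hs => [[<- <-]].
Qed.

Definition P0 : op := pauli_op C [ffun _ => ord0].

Lemma pauli_on_P0 Q : pauli_on Q P0.
Proof. by exists [ffun _ => ord0]; split=> // i _; rewrite ffunE. Qed.

Definition canonG (S' : prog C n) cs : bool -> op -> op :=
  match step S' cs with
  | (_, _, QInit q) :: _ => fun _ r => opmul (opmul P0 (init_map q r)) P0
  | (_, _, QUnit qs U) :: _ => fun _ r => opmul (opmul P0 (unit_map U r)) P0
  | (_, _, QMeas q _) :: _ => fun c r => opmul (opmul P0 (meas_map q c (opmul (opmul P0 r) P0))) P0
  | _ => fun _ r => r
  end.

Lemma canon_ok (S' : prog C n) cs E0 : fault_ok S' cs E0 -> pauli_fault_ok S' cs (canonG S' cs).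
Proof.
rewrite /fault_ok /pauli_fault_ok /canonG.
case: (step S' cs) => [|[[o s'] a] l] //; case: a => // [q|qs U|q c] _.
- by exists P0; split=> //; apply: pauli_on_P0.
- by exists P0; split=> //; apply: pauli_on_P0.
- by exists (fun _ => P0), P0; split; [move=> ?|split] => //; apply: pauli_on_P0.
Qed.

Definition T0 : tree := fun v =>
  match T v, schema S v with
  | Faulty _, Some (Some S', cs) => Faulty (canonG S' cs)
  | _, _ => Ideal C n
  end.

Lemma good_T0 : good T0.
Proof.
apply: good_of.
  move=> v [S' [cs Hs]]; rewrite /T0 Hs; by case: (T v).
move=> v S' cs E Hs; rewrite /T0 Hs.
case HTv: (T v) => [|E0] // [<-].
apply: canon_ok; exact: (proj1 HT) v S' cs E0 Hs HTv.
Qed.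

Lemma edge_kraus (T' : tree) v S' cs b : fault_tree s S T' ->
  schema S v = Some (Some S', cs) -> (nat_of_bool b < size (step S' cs))%N ->
  exists ks, forall r, edge_map (T' v) (qaction_of S' cs b) r = kraus ks r.
Proof.
move=> HT' Hs Hb; case HTv: (T' v) => [|E].
  by exists (ideal_kraus (qaction_of S' cs b)) => r; rewrite /= ideal_kraus_ok.
have Hok := (proj1 HT') v S' cs E Hs HTv.
case: (fault_cases Hok Hb) =>
  [[q [o [s' [ks [_ [-> [_ Hk]]]]]]]|[[qs [U [o [s' [ks [_ [-> [_ Hk]]]]]]]]|[q [o0 [s0 [o1 [s1 [ks [_ [-> [_ Hk]]]]]]]]]]];
  by exists ks.
Qed.

Lemma node_psd (T' : tree) : fault_tree s S T' -> forall v, in_schema S v -> psd (qnode S T' rho v).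
Proof.
move=> HT'; elim/last_ind => [|v b IH] Hv; first by rewrite /qnode /node.
have [S' [cs [Hs [Hb Hn]]]] := node_step Hv.
rewrite (proj2 (Hn T' rho)).
have [ks Hks] := edge_kraus HT' Hs Hb.
rewrite Hks; apply: psd_kraus; apply: IH.
apply: (@in_schema_prefix _ _ S v [:: b]); by rewrite cats1.
Qed.

End Main.

Section Main2.
Variables (C : numClosedFieldType) (n : nat) (S : prog C n) (s : nat) (T : tree C n) (rho : op C n).
Hypotheses (Hwf : wf_prog S) (HT : fault_tree s S T) (Hrho : psd rho).
Local Notation op := (op C n).
Local Notation tree := (tree C n).

Definition Wset (v : position) : vec C n -> Prop :=
  fun w => exists T' : tree, good S s T T' /\ in_supp (qnode S T' rho v) w.

Lemma main_span v : in_schema S v -> forall u, in_supp (qnode S T rho v) u -> spanI (Wset v) u.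
Proof.
elim/last_ind: v => [|v b IH] Hv u Hu.
  apply: sp_mem; exists (T0 S T); split; first exact: good_T0.
  by move: Hu; rewrite /qnode /node.
have [S' [cs [Hs [Hb Hn]]]] := node_step Hv.
have Hv' : in_schema S v by apply: (@in_schema_prefix _ _ S v [:: b]); rewrite cats1.
have Hint : internal S v by exists S', cs.
have IH' := IH Hv'.
rewrite (proj2 (Hn T rho)) in Hu.
have HB : forall T', good S s T T' -> psd (qnode S T' rho v).
  by move=> T' [[HT' _] _]; apply: (node_psd Hrho HT' Hv').
case HTv : (T v) => [|E].
  rewrite HTv /= ideal_kraus_ok in Hu.
  apply: (span_kraus Hu IH') => i Hi w [T' [HG Hw]].
  apply: sp_mem; exists T'; split => //.
  have HTv' : T' v = Ideal C n.
    have := (proj2 HG) v Hint; rewrite HTv; by case: (T' v).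
  rewrite (proj2 (Hn T' rho)) HTv' /= ideal_kraus_ok.
  apply: psd_range => //; [exact: HB | exact: nth_In].
have Hok := (proj1 HT) v S' cs E Hs HTv.
have Hf : is_faulty (T v) by rewrite HTv.
case: (fault_cases Hok Hb) =>
  [[q [o [s' [ks [Hst [Hqa [Hac Hkr]]]]]]]|[[qs [U [o [s' [ks [Hst [Hqa [Hac Hkr]]]]]]]]|
   [q [o0 [s0 [o1 [s1 [ks [Hst [Hqa [Hac Hkr]]]]]]]]]]].
-
  rewrite HTv Hqa /= Hkr in Hu.
  apply: (span_kraus Hu IH') => i Hi w [T' [HG Hw]].
  rewrite (decomp1 (Hac i Hi)) apply_lin2.
  apply: spanI_big => a' _; apply: spanI_big => b' _; apply: sp_scale; apply: sp_mem.
  pose G := fun (_ : bool) r => opmul (opmul (Pq C q a') (init_map q r)) (Pq C q a').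
  exists (tupd T' v (Faulty G)); split.
    apply: (good_upd Hwf HT HG Hs Hf); rewrite /pauli_fault_ok Hst.
    by exists (Pq C q a'); split; [exact: pauli_on_Pq|].
  rewrite (proj2 (Hn _ rho)) qnode_tupd /tupd eqxx Hqa /= /G init_pauli_kraus ?Pq_adj //.
  rewrite [ketbra C q a' b']ketbra_R1; apply: psd_range => //; first exact: HB.
  by case: b' => /=; [right; left | left].
-
  have [HU HUa] := schema_unit_ok Hwf Hs Hst.
  rewrite HTv Hqa /= Hkr in Hu.
  apply: (span_kraus Hu IH') => i Hi w [T' [HG Hw]].
  set K := nth _ ks i.
  have HM : acts_on qs (opmul K (adj U)) by apply: acts_on_mul; [exact: Hac | exact: acts_on_adj].
  have [c [Hc HMe]] := pauli_complete HM.
  have -> : apply K w = apply (opmul K (adj U)) (apply U w).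
    by rewrite -apply_mul opmulA (proj1 HU) opmul1.
  rewrite HMe apply_linP.
  apply: spanI_big => p _.
  case: (eqVneq (c p) 0) => cp.
    apply: (@spanI_eq _ _ _ (fun _ => 0)); first exact: sp_zero.
    by fext; rewrite cp mul0r.
  apply: sp_scale; apply: sp_mem.
  pose G := fun (_ : bool) r => opmul (opmul (pauli_op C p) (unit_map U r)) (pauli_op C p).
  exists (tupd T' v (Faulty G)); split.
    apply: (good_upd Hwf HT HG Hs Hf); rewrite /pauli_fault_ok Hst.
    exists (pauli_op C p); split => //; exists p; split => //; exact: Hc.
  rewrite (proj2 (Hn _ rho)) qnode_tupd /tupd eqxx Hqa /= /G unit_pauli_kraus ?pauli_adj //.
  rewrite -apply_mul; apply: psd_range => //; first exact: HB.
  by left.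
-
  rewrite HTv Hqa /= Hkr in Hu.
  apply: (span_kraus Hu IH') => i Hi w [T' [HG Hw]].
  rewrite (decomp1 (Hac i Hi)) apply_lin2.
  apply: spanI_big => a' _; apply: spanI_big => b' _; apply: sp_scale; apply: sp_mem.
  pose P := Pq C q (a' (+) b); pose Q := Pq C q (b' (+) b).
  pose G := fun (c : bool) r => opmul (opmul P (meas_map q c (opmul (opmul Q r) Q))) P.
  exists (tupd T' v (Faulty G)); split.
    apply: (good_upd Hwf HT HG Hs Hf); rewrite /pauli_fault_ok Hst.
    exists (fun _ => P), Q; split; first by move=> _; exact: pauli_on_Pq.
    by split; [exact: pauli_on_Pq|].
  rewrite (proj2 (Hn _ rho)) qnode_tupd /tupd eqxx Hqa /= /G meas_pauli_kraus ?Pq_adj //.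
  rewrite [ketbra C q a' b'](ketbra_R2 C q a' b' b); apply: psd_range => //; first exact: HB.
  by left.
Qed.

End Main2.

Theorem mainTheorem5 (C : numClosedFieldType) (n : nat) (S : prog C n) (s : nat)
  (T : tree C n) (rho : op C n) (v : position) :
  wf_prog S ->
  fault_tree s S T ->
  density rho ->
  in_schema S v ->
  forall u : vec C n,
    in_supp (qnode S T rho v) u ->
    in_span (fun w => exists T' : tree C n,
               pauli_fault_tree s S T' /\ same_fault_locations S T T' /\
               in_supp (qnode S T' rho v) w) u.
Proof.
move=> Hwf HT [Hrho _] Hv u Hu.
apply: spanI_in_span; apply: (spanI_mono _ (main_span Hwf HT Hrho Hv Hu)).
move=> w [T' [[H1 H2] H3]]; apply: sp_mem; exists T'; by split.
Qed.
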